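(* Suppose hypothesis (H) holds. Then $-\infty<\lambda^*<+\infty$, and there exists $u^*\in S$ with $\lambda(u^* )=\lambda^*$.
   Context: $T,G:\mathbb{R}^n\to\mathbb{R}^n$ are continuously differentiable. $\Sigma=\{\psi\in\mathbb{R}^n\setminus\{0\}:\psi_i\ge0\ \forall i\}$. $S\subset\mathbb{R}^n$ is a nonempty open set with $\langle G(u),\psi\rangle>0$ for all $u\in S,\psi\in\Sigma$. For $u\in S$, $\lambda(u)=\inf_{\psi\in\Sigma}\langle T(u),\psi\rangle/\langle G(u),\psi\rangle$, and $\lambda^*=\sup_{u\in S}\lambda(u)$. Hypothesis (H): for every $u_0\in S$ the set $S(u_0)=\{u\in S:\lambda(u)\ge\lambda(u_0)\}$ is bounded and its closure is contained in $S$. *)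

(* Defs.v *)
From HB Require Import structures.
From mathcomp Require Import all_boot all_order all_algebra.
From mathcomp Require Import all_classical all_reals all_analysis.
Set Implicit Arguments. Unset Strict Implicit. Unset Printing Implicit Defensive.
Import Order.TTheory GRing.Theory Num.Theory.
Import numFieldNormedType.Exports.
Local Open Scope classical_set_scope.
Local Open Scope ring_scope.

Definition inner (R : realType) (n : nat) (u v : 'rV[R]_n) : R :=
  \sum_(i < n) u ord0 i * v ord0 i.

Definition C1 (R : realType) (n : nat) (f : 'rV[R]_n -> 'rV[R]_n) : Prop :=
  (forall x, differentiable f x) /\ (forall v, continuous (fun x => 'd f x v)).

Definition Sigma (R : realType) (n : nat) : set 'rV[R]_n :=
  [set psi | psi != 0 /\ forall i, 0 <= psi ord0 i].

Definition lam (R : realType) (n : nat) (T G : 'rV[R]_n -> 'rV[R]_n)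
  (u : 'rV[R]_n) : \bar R :=
  ereal_inf [set ((inner (T u) psi / inner (G u) psi)%:E) | psi in @Sigma R n].

Definition lam_star (R : realType) (n : nat) (T G : 'rV[R]_n -> 'rV[R]_n)
  (S : set 'rV[R]_n) : \bar R :=
  ereal_sup [set lam T G u | u in S].

Definition Ssub (R : realType) (n : nat) (T G : 'rV[R]_n -> 'rV[R]_n)
  (S : set 'rV[R]_n) (u0 : 'rV[R]_n) : set 'rV[R]_n :=
  [set u | S u /\ (lam T G u0 <= lam T G u)%E].

Definition hypH (R : realType) (n : nat) (T G : 'rV[R]_n -> 'rV[R]_n)
  (S : set 'rV[R]_n) : Prop :=
  forall u0, S u0 -> bounded_set (Ssub T G S u0) /\ closure (Ssub T G S u0) `<=` S.

(* Main.v *)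
Require Import Defs.
From HB Require Import structures.
From mathcomp Require Import all_boot all_order all_algebra.
From mathcomp Require Import all_classical all_reals all_analysis.
Import Order.TTheory GRing.Theory Num.Theory.
Import numFieldNormedType.Exports.
Local Open Scope classical_set_scope.
Local Open Scope ring_scope.

Lemma inner_delta (R : realType) (n : nat) (v : 'rV[R]_n) (i : 'I_n) :
  inner v (delta_mx ord0 i) = v ord0 i.
Proof.
rewrite /inner (bigD1 i) //= mxE !eqxx mulr1 big1 ?addr0 // => j /negbTE ji.
by rewrite mxE ji andbF mulr0.
Qed.

Lemma delta_Sigma (R : realType) (n : nat) (i : 'I_n) :
  @Sigma R n (delta_mx ord0 i).
Proof.
split.
  apply/negP => /eqP H.
  have := congr1 (fun f => f ord0 i) H.
  by rewrite /= !mxE !eqxx /= => /eqP; rewrite oner_eq0.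
by move=> j; rewrite mxE ler0n.
Qed.

Lemma bounded_closure (R : realType) (n : nat) (A : set 'rV[R]_n) :
  bounded_set A -> bounded_set (closure A).
Proof.
move=> /ex_strict_bound_gt0 [M M0 AM].
have sub : closure A `<=` closed_ball_ Num.norm (0 : 'rV[R]_n) M.
  have -> : closed_ball_ Num.norm (0 : 'rV[R]_n) M =
      closure (closed_ball_ Num.norm (0 : 'rV[R]_n) M).
    exact/closure_id/closed_closed_ball_.
  apply: closureS => x /AM /= /ltW.
  by rewrite /closed_ball_ /= sub0r normrN.
exists M; split; first exact: gtr0_real.
move=> M' MM' x /sub; rewrite /closed_ball_ /= sub0r normrN => xM.
by rewrite (le_trans xM) // ltW.
Qed.

Lemma bigmin_att (R : realType) (I : Type) (r : seq I) (F : I -> R) x0 :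
  exists j, \big[Num.min/F x0]_(i <- r) F i = F j.
Proof.
elim: r => [|i r [j IH]]; first by exists x0; rewrite big_nil.
rewrite big_cons IH; have [h|h] := leP (F i) (F j).
  by exists i.
by exists j.
Qed.

Theorem lemma2 (R : realType) (n : nat) (T G : 'rV[R]_n -> 'rV[R]_n)
  (S : set 'rV[R]_n) :
  (0 < n)%N ->
  C1 T -> C1 G ->
  S !=set0 -> open S ->
  (forall u psi, S u -> @Sigma R n psi -> 0 < inner (G u) psi) ->
  hypH T G S ->
  (-oo < lam_star T G S < +oo)%E /\
  exists ustar, S ustar /\ lam T G ustar = lam_star T G S.
Proof.
move=> n0 [dT _] [dG _] [u0 Su0] _ Gpos hH.
destruct n as [|k]; first by [].
pose q (u : 'rV[R]_k.+1) (i : 'I_k.+1) := T u ord0 i / G u ord0 i.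
pose m (u : 'rV[R]_k.+1) := \big[Order.min/q u ord0]_(i < k.+1) q u i.
have Gi u i : S u -> 0 < G u ord0 i.
  by move=> Su; rewrite -inner_delta; apply: Gpos => //; exact: delta_Sigma.
have lamE u : S u -> lam T G u = (m u)%:E.
  move=> Su; apply/eqP; rewrite eq_le; apply/andP; split.
    rewrite /m; have [j ->] := @bigmin_att R _ (index_enum 'I_k.+1) (q u) ord0.
    apply: ereal_inf_lbound; exists (delta_mx ord0 j); first exact: delta_Sigma.
    by rewrite !inner_delta.
  apply: le_ereal_inf_tmp => _ [psi Spsi <-]; rewrite lee_fin.
  rewrite ler_pdivlMr; last exact: Gpos.
  rewrite /inner mulr_sumr; apply: ler_sum => j _.
  rewrite mulrA ler_wpM2r //; first exact: Spsi.2.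
  by rewrite -ler_pdivlMr ?Gi //; exact: bigmin_le.
have qc i x : S x -> {for x, continuous (fun u => q u i)}.
  move=> Sx.
  have hT : {for x, continuous (fun u => T u ord0 i)}.
    exact: (continuous_comp (differentiable_continuous (dT x))
      (@coord_continuous R 1 k.+1 ord0 i (T x))).
  have hG : {for x, continuous (fun u => G u ord0 i)}.
    exact: (continuous_comp (differentiable_continuous (dG x))
      (@coord_continuous R 1 k.+1 ord0 i (G x))).
  have hG0 : G x ord0 i != 0 by rewrite gt_eqF ?Gi.
  exact: (continuousM hT (continuousV hG0 hG)).
have mc x : S x -> {for x, continuous m}.
  move=> Sx.
  suff H : forall r, {for x, continuous (fun u => \big[Num.min/q u ord0]_(i <- r) q u i)}.
    exact: H.
  elim => [|i r IH].
    have -> : (fun u => \big[Num.min/q u ord0]_(i <- [::]) q u i) = fun u => q u ord0.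
      by apply: funext => u; rewrite big_nil.
    exact: qc.
  have -> : (fun u => \big[Num.min/q u ord0]_(j <- i :: r) q u j) =
     (fun u => q u i) \min (fun u => \big[Num.min/q u ord0]_(j <- r) q u j).
    by apply: funext => u; rewrite big_cons.
  exact: (@continuous_min R _ (fun u => q u i) (fun u => \big[Num.min/q u ord0]_(j <- r) q u j) x (qc i x Sx) IH).
pose A := Ssub T G S u0.
have [bA cAS] := hH u0 Su0.
have Au0 : A u0 by split.
have cK : compact (closure A).
  apply: bounded_closed_compact; [exact: bounded_closure | exact: closed_closure].
have [c cK' cmax] : exists2 c, c \in closure A & forall t, t \in closure A -> m t <= m c.
  apply: compact_EVT_max => //; first by exists u0; exact: subset_closure.
  apply: continuous_in_subspaceT => x /set_mem /cAS Sx; exact: mc.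
have Sc : S c by apply: cAS; exact: set_mem.
have starE : lam_star T G S = (m c)%:E.
  apply/eqP; rewrite eq_le; apply/andP; split; last first.
    by rewrite -lamE //; apply: ereal_sup_ubound; exists c.
  apply: ge_ereal_sup => _ [u Su <-].
  have [le|lt] := leP (lam T G u0) (lam T G u).
    rewrite lamE // lee_fin; apply: cmax; apply/mem_set/subset_closure; by split.
  apply: (le_trans (ltW lt)); rewrite !lamE // lee_fin; apply: cmax.
  exact/mem_set/subset_closure.
split; first by rewrite starE ltNye ltey.
by exists c; split => //; rewrite starE lamE.
Qed.
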